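(* Let $\Delta$ be a simplicial polytopal fan in $\mathbb{R}^d$ with ray generators $\mathbf{v}_1,\ldots,\mathbf{v}_n$, let $\mathbf{u}^{(1)},\ldots,\mathbf{u}^{(m)}\in\mathbb{R}^d$, $U=(\mathbf{u}^{(1)},\ldots,\mathbf{u}^{(m)})^\mathsf{T}$, let $\mathbf{h}_0\in\mathcal{P}(\Delta)$, $\mathbf{y}_0=A_U\mathbf{h}_0$, and $\mathbf{y}\in\mathbb{R}^m$. Let $\hat{\mathbf{y}}$ be the unique point of $A_U\mathcal{P}(\Delta)$ with minimal distance to $\mathbf{y}$, and $\bar{\mathbf{y}}$ the orthogonal projection of $\mathbf{y}$ onto the subspace $A_U\mathbb{R}^n$. Let $\bar{\mathbf{h}},\hat{\mathbf{h}}\in\mathbb{R}^n$ satisfy $A_U\bar{\mathbf{h}}=\bar{\mathbf{y}}$ and $A_U\hat{\mathbf{h}}=\hat{\mathbf{y}}$. Then \[ \|\hat{\mathbf{y}}-\mathbf{y}_0\|\le\|\bar{\mathbf{y}}-\mathbf{y}_0\|, \qquad \sqrt{\lambda_1(A_U^\mathsf{T}A_U)}\,\|\hat{\mathbf{h}}-\mathbf{h}_0\|\le\sqrt{\lambda_n(A_U^\mathsf{T}A_U)}\,\|\bar{\mathbf{h}}-\mathbf{h}_0\|. \]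
   Context: A fan is simplicial if every cone is generated by linearly independent vectors; polytopal if it is the normal fan of a polytope. The deformation cone $\mathcal{P}(\Delta)\subseteq\mathbb{R}^n$ is the closed polyhedral cone of support vectors $(h_P(\mathbf{v}_i))_i$ of polytopes $P$ whose normal fan is coarsened by $\Delta$, where $h_P(\mathbf{u})=\max_{\mathbf{x}\in P}\langle\mathbf{x},\mathbf{u}\rangle$. For $\mathbf{u}\in\mathbb{R}^d$, with $\sigma$ the cone of $\Delta$ containing $\mathbf{u}$ in its relative interior and $\mathbf{u}=\sum_{k\in I_\sigma}\lambda_k\mathbf{v}_k$ over the generators of $\sigma$, set $[\mathbf{u}]_i=\lambda_i$ for $i\in I_\sigma$ and $0$ otherwise; $A_U$ is the $m\times n$ matrix with rows $[\mathbf{u}^{(i)}]^\mathsf{T}$. For a symmetric matrix $A\in\mathbb{R}^{n\times n}$, $\lambda_1(A)\le\cdots\le\lambda_n(A)$ are its eigenvalues. *)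

(* Defs.v *)
From HB Require Import structures.
From mathcomp Require Import all_boot all_order all_algebra.
From mathcomp Require Import all_classical all_reals.
Set Implicit Arguments. Unset Strict Implicit. Unset Printing Implicit Defensive.
Import Order.TTheory GRing.Theory Num.Theory.
Local Open Scope ring_scope.
Local Open Scope classical_set_scope.

Section Defs.
Variable R : realType.

Definition dotp (d : nat) (x y : 'rV[R]_d) : R := \sum_(j < d) x 0 j * y 0 j.

Definition enorm (a b : nat) (x : 'M[R]_(a, b)) : R :=
  Num.sqrt (\sum_(i < a) \sum_(j < b) x i j ^+ 2).

(* smallest / largest eigenvalue of a square matrix (the matrices we apply
   this to are symmetric, so all eigenvalues are real) *)
Definition eig_min (n : nat) (M : 'M[R]_n) : R := inf [set a | eigenvalue M a].
Definition eig_max (n : nat) (M : 'M[R]_n) : R := sup [set a | eigenvalue M a].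

Definition cone_of (d n : nat) (v : 'I_n -> 'rV[R]_d) (I : {set 'I_n}) : set 'rV[R]_d :=
  [set x | exists lam : 'I_n -> R,
     (forall i, i \in I -> 0 <= lam i) /\ x = \sum_(i in I) lam i *: v i].

Definition span_of (d n : nat) (v : 'I_n -> 'rV[R]_d) (I : {set 'I_n}) : set 'rV[R]_d :=
  [set x | exists c : 'I_n -> R, x = \sum_(i in I) c i *: v i].

Definition relint_in (d : nat) (L C : set 'rV[R]_d) : set 'rV[R]_d :=
  [set x | C x /\ exists2 e : R, 0 < e &
     forall y, L y -> enorm (y - x) < e -> C y].

Definition lin_indep (d n : nat) (v : 'I_n -> 'rV[R]_d) (I : {set 'I_n}) : Prop :=
  forall c : 'I_n -> R, \sum_(i in I) c i *: v i = 0 -> forall i, i \in I -> c i = 0.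

(* A simplicial fan with ray generators v_1..v_n: its cones are cone(v_I),
   I in [cones]; every cone generated by linearly independent vectors; the
   rays are exactly the cone(v_i); closed under faces (for a simplicial cone
   the faces of cone(v_I) are the cone(v_J), J \subset I); and the
   intersection of two cones is a common face. *)
Definition simplicial_fan (d n : nat) (v : 'I_n -> 'rV[R]_d)
    (cones : set {set 'I_n}) : Prop :=
  [/\ forall i : 'I_n, cones [set i]%SET,
      forall I, cones I -> lin_indep v I,
      forall I J : {set 'I_n}, cones I -> (J \subset I)%SET -> cones J &
      forall I J : {set 'I_n}, cones I -> cones J ->
        cone_of v I `&` cone_of v J = cone_of v (I :&: J)%SET].

Definition conv (d k : nat) (p : 'I_k -> 'rV[R]_d) : set 'rV[R]_d :=
  [set x | exists mu : 'I_k -> R,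
     [/\ forall j, 0 <= mu j, \sum_j mu j = 1 & x = \sum_j mu j *: p j]].

Definition supp_fun (d : nat) (P : set 'rV[R]_d) (u : 'rV[R]_d) : R :=
  sup [set dotp x u | x in P].

Definition face_max (d : nat) (P : set 'rV[R]_d) (w : 'rV[R]_d) : set 'rV[R]_d :=
  [set x | P x /\ dotp x w = supp_fun P w].

Definition normal_cone (d : nat) (P F : set 'rV[R]_d) : set 'rV[R]_d :=
  [set u | forall x, F x -> dotp x u = supp_fun P u].

Definition normal_fan (d : nat) (P : set 'rV[R]_d) : set (set 'rV[R]_d) :=
  [set normal_cone P (face_max P w) | w in [set: 'rV[R]_d]].

Definition polytopal (d n : nat) (v : 'I_n -> 'rV[R]_d) (cones : set {set 'I_n}) : Prop :=
  exists k (p : 'I_k -> 'rV[R]_d), (0 < k)%N /\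
    normal_fan (conv p) = [set cone_of v I | I in cones].

(* deformation cone: support vectors (h_P(v_i))_i of the polytopes P whose
   normal fan is coarsened by the fan (each cone of the fan lies in a cone
   of the normal fan of P) *)
Definition deformation_cone (d n : nat) (v : 'I_n -> 'rV[R]_d)
    (cones : set {set 'I_n}) : set 'cV[R]_n :=
  [set h | exists k (p : 'I_k -> 'rV[R]_d), [/\ (0 < k)%N,
     (forall I, cones I -> exists2 C, normal_fan (conv p) C & cone_of v I `<=` C) &
     h = \col_i supp_fun (conv p) (v i)]].

(* [u] : lam is the coordinate vector of u w.r.t. the generators of the cone
   sigma containing u in its relative interior (zero outside sigma) *)
Definition fan_coords (d n : nat) (v : 'I_n -> 'rV[R]_d) (cones : set {set 'I_n})
    (u : 'rV[R]_d) (lam : 'rV[R]_n) : Prop :=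
  exists2 I, cones I &
    [/\ relint_in (span_of v I) (cone_of v I) u,
        (forall i, i \notin I -> lam 0 i = 0) &
        u = \sum_(i in I) lam 0 i *: v i].

(* A is the matrix A_U: its i-th row is [u^(i)] with u^(i) the i-th row of U *)
Definition is_AU (d n m : nat) (v : 'I_n -> 'rV[R]_d) (cones : set {set 'I_n})
    (U : 'M[R]_(m, d)) (A : 'M[R]_(m, n)) : Prop :=
  forall i, fan_coords v cones (row i U) (row i A).

End Defs.

(* Main.v *)
Require Import Defs.
From HB Require Import structures.
From mathcomp Require Import all_boot all_order all_algebra.
From mathcomp Require Import all_classical all_reals.
From mathcomp Require Import topology normedtype derive matrix_normedtype.
Import numFieldNormedType.Exports.
From mathcomp Require Import ring lra.
Require Import Defs.
Import Order.TTheory GRing.Theory Num.Theory.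
Local Open Scope ring_scope.
Local Open Scope classical_set_scope.
Set Implicit Arguments. Unset Strict Implicit. Unset Printing Implicit Defensive.

Section PartA.
Variable R : realType.

Lemma dotp_sumZl d k (P : pred 'I_k) (mu : 'I_k -> R) (p : 'I_k -> 'rV[R]_d) u :
  dotp (\sum_(j | P j) mu j *: p j) u = \sum_(j | P j) mu j * dotp (p j) u.
Proof.
rewrite /dotp.
under eq_bigr do rewrite summxE mulr_suml.
rewrite exchange_big /=; apply: eq_bigr => j _.
rewrite mulr_sumr; apply: eq_bigr => c _; by rewrite mxE mulrA.
Qed.

Lemma dotp_sumZr d k (P : pred 'I_k) (mu : 'I_k -> R) (p : 'I_k -> 'rV[R]_d) u :
  dotp u (\sum_(j | P j) mu j *: p j) = \sum_(j | P j) mu j * dotp u (p j).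
Proof.
rewrite /dotp.
under eq_bigr do rewrite summxE mulr_sumr.
rewrite exchange_big /=; apply: eq_bigr => j _.
rewrite mulr_sumr; apply: eq_bigr => c _; by rewrite mxE mulrCA.
Qed.

Lemma dotpDZl d a b (x y u : 'rV[R]_d) :
  dotp (a *: x + b *: y) u = a * dotp x u + b * dotp y u.
Proof.
rewrite /dotp !mulr_sumr -big_split /=; apply: eq_bigr => c _.
by rewrite !mxE mulrDl !mulrA.
Qed.

Lemma conv_point d k (p : 'I_k -> 'rV[R]_d) j : conv p (p j).
Proof.
exists (fun i => (i == j)%:R); split.
- by move=> i; rewrite ler0n.
- rewrite (bigD1 j) //= eqxx big1 ?addr0 // => i /negbTE ->; done.
- rewrite (bigD1 j) //= eqxx scale1r big1 ?addr0 // => i /negbTE ->.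
  by rewrite scale0r.
Qed.

Lemma conv_le d k (p : 'I_k -> 'rV[R]_d) u s :
  (forall j, dotp (p j) u <= s) -> forall x, conv p x -> dotp x u <= s.
Proof.
move=> H x [mu [mu0 mu1 ->]].
rewrite (dotp_sumZl xpredT) -[leRHS]mul1r -mu1 mulr_suml.
by apply: ler_sum => j _; apply: ler_wpM2l.
Qed.

Lemma supp_conv d k (p : 'I_k -> 'rV[R]_d) u j0 :
  (forall j, dotp (p j) u <= dotp (p j0) u) ->
  supp_fun (conv p) u = dotp (p j0) u.
Proof.
move=> H; rewrite /supp_fun.
have ub : ubound [set dotp x u | x in conv p] (dotp (p j0) u).
  by move=> _ [x cx <-]; exact: conv_le cx.
have ne : [set dotp x u | x in conv p] (dotp (p j0) u).
  by exists (p j0) => //; exact: conv_point.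
apply: le_anti; rewrite ge_sup //=; last by exists (dotp (p j0) u).
apply: sup_upper_bound => //; split; first by exists (dotp (p j0) u).
by exists (dotp (p j0) u).
Qed.

Lemma argmax_ex k (f : 'I_k -> R) : (0 < k)%N -> exists j0, forall j, f j <= f j0.
Proof.
move=> k0; pose i0 := Ordinal k0.
case: (@arg_maxP _ _ _ i0 xpredT f) => // j _ H; exists j => i; exact: H.
Qed.

Lemma conv_le_supp d k (p : 'I_k -> 'rV[R]_d) u x :
  (0 < k)%N -> conv p x -> dotp x u <= supp_fun (conv p) u.
Proof.
move=> k0 cx; have [j0 Hj] := @argmax_ex _ (fun j => dotp (p j) u) k0.
rewrite (supp_conv Hj); exact: conv_le cx.
Qed.

Definition linC d n (v : 'I_n -> 'rV[R]_d) (I : {set 'I_n}) (h : 'rV[R]_d -> R) :=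
  forall c : 'I_n -> R, (forall i, i \in I -> 0 <= c i) ->
    h (\sum_(i in I) c i *: v i) = \sum_(i in I) c i * h (v i).

Lemma cone_gen d n (v : 'I_n -> 'rV[R]_d) (I : {set 'I_n}) i : i \in I -> cone_of v I (v i).
Proof.
move=> iI; exists (fun k => (k == i)%:R); split.
  by move=> k _; rewrite ler0n.
rewrite (bigD1 i) //= eqxx scale1r big1 ?addr0 // => k /andP [_ /negbTE ->].
by rewrite scale0r.
Qed.

Lemma coars_lin d n (v : 'I_n -> 'rV[R]_d) k (p : 'I_k -> 'rV[R]_d) I :
  (0 < k)%N ->
  (exists2 C, normal_fan (conv p) C & cone_of v I `<=` C) ->
  linC v I (supp_fun (conv p)).
Proof.
move=> k0 [C [w _ <-] sub].
have [j0 Hj] := @argmax_ex _ (fun j => dotp (p j) w) k0.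
have fy : face_max (conv p) w (p j0).
  by split; [exact: conv_point | rewrite (supp_conv Hj)].
have E u : cone_of v I u -> supp_fun (conv p) u = dotp (p j0) u.
  by move=> /sub /(_ _ fy) ->.
move=> c c0; rewrite E; last by exists c.
rewrite dotp_sumZr; apply: eq_bigr => i iI; rewrite E //; exact: cone_gen.
Qed.

Lemma lin_coars d n (v : 'I_n -> 'rV[R]_d) k (p : 'I_k -> 'rV[R]_d) I :
  (0 < k)%N -> linC v I (supp_fun (conv p)) ->
  exists2 C, normal_fan (conv p) C & cone_of v I `<=` C.
Proof.
move=> k0 lin.
set w := \sum_(i in I) 1 *: v i.
exists (normal_cone (conv p) (face_max (conv p) w)); first by exists w.
move=> _ [lam [lam0 ->]] x [cx dx].
set h := supp_fun (conv p).
have le i : dotp x (v i) <= h (v i) by exact: conv_le_supp.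
have eq0 : \sum_(i in I) (h (v i) - dotp x (v i)) = 0.
  rewrite sumrB; apply/eqP; rewrite subr_eq0; apply/eqP.
  have e1 : dotp x w = \sum_(i in I) 1 * h (v i).
    by rewrite dx /w lin // => *; exact: ler01.
  have e2 : dotp x w = \sum_(i in I) 1 * dotp x (v i) by rewrite /w dotp_sumZr.
  transitivity (\sum_(i in I) 1 * h (v i)).
    by apply: eq_bigr => i _; rewrite mul1r.
  by rewrite -e1 e2; apply: eq_bigr => i _; rewrite mul1r.
have ge0 : forall i, i \in I -> 0 <= h (v i) - dotp x (v i) by move=> i _; rewrite subr_ge0.
have eqi := psumr_eq0P ge0 eq0.
rewrite /h lin // dotp_sumZr; apply: eq_bigr => i iI.
by have /eqP := eqi i iI; rewrite subr_eq0 => /eqP; rewrite /h => ->.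
Qed.

End PartA.

Section A3.
Variable R : realType.

Lemma dc_comb d n (v : 'I_n -> 'rV[R]_d) cones h1 h2 (a b : R) :
  0 <= a -> 0 <= b -> deformation_cone v cones h1 -> deformation_cone v cones h2 ->
  deformation_cone v cones (a *: h1 + b *: h2).
Proof.
move=> a0 b0 [k1 [p [k10 c1 ->]]] [k2 [q [k20 c2 ->]]].
pose T : finType := ('I_k1 * 'I_k2)%type.
pose r (j : 'I_#|T|) : 'rV[R]_d :=
  a *: p (enum_val j).1 + b *: q (enum_val j).2.
have key u : supp_fun (conv r) u =
    a * supp_fun (conv p) u + b * supp_fun (conv q) u.
  have [jp Hp] := @argmax_ex _ _ (fun j => dotp (p j) u) k10.
  have [jq Hq] := @argmax_ex _ _ (fun j => dotp (q j) u) k20.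
  rewrite (supp_conv Hp) (supp_conv Hq).
  have -> : a * dotp (p jp) u + b * dotp (q jq) u =
            dotp (r (enum_rank ((jp, jq) : T))) u.
    by rewrite /r enum_rankK dotpDZl.
  apply: supp_conv => j; rewrite /r enum_rankK !dotpDZl.
  by apply: lerD; apply: ler_wpM2l.
exists #|T|, r; split.
- by apply: leq_ltn_trans (ltn_ord (enum_rank ((Ordinal k10, Ordinal k20) : T))).
- move=> I cI; apply: lin_coars.
    by apply: leq_ltn_trans (ltn_ord (enum_rank ((Ordinal k10, Ordinal k20) : T))).
  move=> c c0.
  have l1 := coars_lin k10 (c1 I cI) c0.
  have l2 := coars_lin k20 (c2 I cI) c0.
  rewrite key l1 l2 mulr_sumr mulr_sumr -big_split /=.
  by apply: eq_bigr => i _; rewrite key mulrDr !mulrA [a * c i]mulrC [b * c i]mulrC.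
- by apply/colP => i; rewrite !mxE key.
Qed.

End A3.

Section PB.
Variable R : realType.

Definition ipc m (x y : 'cV[R]_m) := \sum_i x i 0 * y i 0.

Lemma enormc m (x : 'cV[R]_m) : enorm x = Num.sqrt (ipc x x).
Proof. by rewrite /enorm /ipc; congr Num.sqrt; apply: eq_bigr => i _; rewrite big_ord1 expr2. Qed.

Lemma ipc_ge0 m (x : 'cV[R]_m) : 0 <= ipc x x.
Proof. by apply: sumr_ge0 => i _; rewrite -expr2 sqr_ge0. Qed.

Lemma enorm_le m (x y : 'cV[R]_m) : ipc x x <= ipc y y -> enorm x <= enorm y.
Proof. by move=> H; rewrite !enormc ler_sqrt // ipc_ge0. Qed.

Lemma ipc_id1 m (x y z : 'cV[R]_m) :
  ipc (x - z) (x - z) = ipc (y - z) (y - z) + ipc (x - y) (x - y) + 2 * ipc (y - z) (x - y).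
Proof.
rewrite /ipc mulr_sumr -!big_split /=; apply: eq_bigr => i _; rewrite !mxE; ring.
Qed.

Lemma ipc_id2 m (a b c y : 'cV[R]_m) :
  ipc (a - b) (c - a) = ipc (b - a) (a - y) - ipc (a - b) (y - c).
Proof.
rewrite /ipc -sumrB; apply: eq_bigr => i _; rewrite !mxE; ring.
Qed.

Lemma ipc_id3 m (e g : 'cV[R]_m) t :
  ipc (e + t *: g) (e + t *: g) = ipc e e + t * (2 * ipc g e + t * ipc g g).
Proof.
rewrite /ipc !mulr_sumr -!big_split /= !mulr_sumr -!big_split /=.
apply: eq_bigr => i _; rewrite !mxE; ring.
Qed.

Lemma partB d n m (v : 'I_n -> 'rV[R]_d) cones (A : 'M[R]_(m, n))
    (h0 : 'cV[R]_n) (y0 y yhat ybar : 'cV[R]_m) :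
  deformation_cone v cones h0 ->
  y0 = A *m h0 ->
  (exists2 h, deformation_cone v cones h & yhat = A *m h) ->
  (forall h, deformation_cone v cones h -> enorm (yhat - y) <= enorm (A *m h - y)) ->
  (forall h : 'cV[R]_n, (A *m h)^T *m (y - ybar) = 0) ->
  enorm (yhat - y0) <= enorm (ybar - y0).
Proof.
move=> dc0 ey0 [hd dcd eyh] clos orth.
have orth' : ipc (yhat - y0) (y - ybar) = 0.
  have := orth (hd - h0); rewrite [A *m (hd - h0)]mulmxBr -eyh -ey0 => /matrixP /(_ 0 0).
  move=> H; transitivity (((yhat - y0)^T *m (y - ybar)) 0 0); last by rewrite H mxE.
  by rewrite mxE /ipc; apply: eq_bigr => i _; rewrite !mxE.
have c0 : 0 <= ipc (y0 - yhat) (yhat - y).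
  set c := ipc _ _; set q := ipc (y0 - yhat) (y0 - yhat).
  have q0 : 0 <= q by exact: ipc_ge0.
  have key t : 0 < t -> t <= 1 -> 0 <= 2 * c + t * q.
    move=> t0 t1.
    have t1' : 0 <= 1 - t by rewrite subr_ge0.
    have dct := dc_comb t1' (ltW t0) dcd dc0.
    have := clos _ dct.
    have -> : A *m ((1 - t) *: hd + t *: h0) - y = (yhat - y) + t *: (y0 - yhat).
      rewrite mulmxDr -!scalemxAr -eyh -ey0.
      by apply/matrixP => i j; rewrite !mxE; ring.
    rewrite !enormc ler_sqrt ?ipc_ge0 // ipc_id3 lerDl.
    by rewrite pmulr_rge0.
  rewrite leNgt; apply/negP => cneg.
  have qc : 0 < q - c by rewrite subr_gt0 (lt_le_trans cneg).
  pose t := - c / (q - c).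
  have t0 : 0 < t by rewrite divr_gt0 // oppr_gt0.
  have t1 : t <= 1.
    rewrite ler_pdivrMr // mul1r.
    lra.
  have tq : t * (q - c) = - c by rewrite /t divfK // gt_eqF.
  have := key t t0 t1.
  move: cneg q0 tq; clear; move=> *; nra.
apply: enorm_le.
rewrite (ipc_id1 ybar yhat y0) (ipc_id2 yhat y0 ybar y) orth' subr0.
rewrite -addrA lerDl; apply: addr_ge0; first exact: ipc_ge0.
by apply: mulr_ge0.
Qed.

End PB.

Section PC1.
Variable R : realType.
Variables (m n : nat) (A : 'M[R]_(m, n)).

Definition nz (z : 'rV[R]_n) := \sum_j z 0 j ^+ 2.
Definition qf (z : 'rV[R]_n) := \sum_i ((z *m A^T) 0 i) ^+ 2.
Definition bf (z w : 'rV[R]_n) := \sum_i (z *m A^T) 0 i * (w *m A^T) 0 i.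
Definition ipr (z w : 'rV[R]_n) := \sum_j z 0 j * w 0 j.

Lemma qf_expand z w t : qf (z + t *: w) = qf z + t * (2 * bf z w + t * qf w).
Proof.
rewrite /qf /bf mulmxDl -scalemxAl [2 * _]mulr_sumr [t * \sum_i _]mulr_sumr -big_split /= mulr_sumr -big_split /=.
apply: eq_bigr => i _.
rewrite (_ : (z *m A^T + t *: (w *m A^T)) 0 i = (z *m A^T) 0 i + t * (w *m A^T) 0 i); last by rewrite !mxE.
ring.
Qed.

Lemma nz_expand z w t : nz (z + t *: w) = nz z + t * (2 * ipr z w + t * nz w).
Proof.
rewrite /nz /ipr [2 * _]mulr_sumr [t * \sum_i _]mulr_sumr -big_split /= mulr_sumr -big_split /=.
apply: eq_bigr => i _; rewrite !mxE; ring.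
Qed.

Lemma qfZ a z : qf (a *: z) = a ^+ 2 * qf z.
Proof.
rewrite /qf -scalemxAl mulr_sumr; apply: eq_bigr => i _; rewrite mxE; ring.
Qed.

Lemma nzZ a z : nz (a *: z) = a ^+ 2 * nz z.
Proof.
rewrite /nz mulr_sumr; apply: eq_bigr => i _; rewrite mxE; ring.
Qed.

Lemma qf_ge0 z : 0 <= qf z.
Proof. by apply: sumr_ge0 => i _; rewrite sqr_ge0. Qed.

Lemma nz_ge0 z : 0 <= nz z.
Proof. by apply: sumr_ge0 => i _; rewrite sqr_ge0. Qed.

Lemma nz_eq0 z : nz z = 0 -> z = 0.
Proof.
move=> H; have := psumr_eq0P (fun i _ => sqr_ge0 (z 0 i)) H => E.
apply/rowP => j; rewrite mxE; apply/eqP; rewrite -sqrf_eq0; apply/eqP; exact: E.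
Qed.

Lemma bf_M z w : bf z w = \sum_j (z *m (A^T *m A)) 0 j * w 0 j.
Proof.
rewrite /bf mulmxA.
under [RHS]eq_bigr do rewrite mxE mulr_suml.
rewrite [RHS]exchange_big /=; apply: eq_bigr => i _.
rewrite [(w *m A^T) 0 i]mxE mulr_sumr; apply: eq_bigr => j _; rewrite [A^T j i]mxE; ring.
Qed.

Lemma qf_bf z : qf z = bf z z.
Proof. by rewrite /qf /bf; apply: eq_bigr => i _; rewrite expr2. Qed.

Lemma qf_eig a w : w *m (A^T *m A) = a *: w -> qf w = a * nz w.
Proof.
move=> E; rewrite qf_bf bf_M E /nz mulr_sumr; apply: eq_bigr => j _.
rewrite mxE; ring.
Qed.

Lemma quad0 (c q : R) : (forall t, 0 <= t * (2 * c + t * q)) -> c = 0.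
Proof.
move=> H.
have a0 : 0 < `|q| + 1 by rewrite ltr_wpDl.
pose t := - c / (`|q| + 1).
have ta : t * (`|q| + 1) = - c by rewrite /t divfK // gt_eqF.
have := H t.
have h1 : q <= `|q| by apply: ler_norm.
have h2 : - q <= `|q| by rewrite -normrN ler_norm.
move=> Ht.
have : 0 <= (t * (`|q| + 1)) * (2 * c * (`|q| + 1) + (t * (`|q| + 1)) * q).
  have -> : (t * (`|q| + 1)) * (2 * c * (`|q| + 1) + (t * (`|q| + 1)) * q) =
     (t * (2 * c + t * q)) * ((`|q| + 1) ^+ 2) by ring.
  by apply: mulr_ge0 => //; rewrite sqr_ge0.
rewrite ta => H2.
have : c ^+ 2 * (`|q| + 2 - (q - `|q|)) <= 0.
  move: H2; set b := `|q|; move=> H2; nra.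
move=> H3; apply/eqP; rewrite -sqrf_eq0; apply/eqP.
apply: le_anti; rewrite sqr_ge0 andbT.
have p : 0 < `|q| + 2 - (q - `|q|) by lra.
by rewrite -(pmulr_lle0 _ p).
Qed.

Lemma sum_delta (r : 'rV[R]_n) j : \sum_k r 0 k * (delta_mx 0 j : 'rV[R]_n) 0 k = r 0 j.
Proof.
rewrite (bigD1 j) //= big1 ?addr0; first by rewrite mxE !eqxx mulr1.
by move=> k /negbTE kj; rewrite mxE kj andbF mulr0.
Qed.

Lemma ext_eig (s mu : R) z0 : s != 0 -> nz z0 = 1 -> qf z0 = mu ->
  (forall z, 0 <= s * (qf z - mu * nz z)) ->
  z0 *m (A^T *m A) = mu *: z0.
Proof.
move=> s0 n1 q1 H.
have key w : bf z0 w = mu * ipr z0 w.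
  have c0 : s * (bf z0 w - mu * ipr z0 w) = 0.
    apply: (@quad0 _ (s * (qf w - mu * nz w))) => t.
    have := H (z0 + t *: w); rewrite qf_expand nz_expand q1 n1.
    suff -> : s * (mu + t * (2 * bf z0 w + t * qf w) -
                mu * (1 + t * (2 * ipr z0 w + t * nz w))) =
              t * (2 * (s * (bf z0 w - mu * ipr z0 w)) + t * (s * (qf w - mu * nz w))) by [].
    ring.
  by apply/eqP; rewrite -subr_eq0; move/eqP: c0; rewrite mulf_eq0 (negbTE s0).
apply/rowP => j.
have := key (delta_mx 0 j).
rewrite bf_M /ipr !sum_delta => ->.
by rewrite mxE.
Qed.

End PC1.

Section PC2.
Variable R : realType.
Variables (m n : nat) (A : 'M[R]_(m, n)).

Lemma cont_sum (I : finType) (F : I -> 'rV[R]_n -> R) :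
  (forall i, continuous (F i)) -> continuous (fun x => \sum_i F i x).
Proof.
move=> H; apply: continuous_big => //; exact: add_continuous.
Qed.

Lemma cont_sq (f : 'rV[R]_n -> R) : continuous f -> continuous (fun z => f z ^+ 2).
Proof. by move=> H z; apply: continuousM; apply: H. Qed.

Lemma cont_nz : continuous (@nz R n).
Proof.
apply: cont_sum => j; apply: cont_sq; exact: (@coord_continuous R 1 n 0 j).
Qed.

Lemma cont_qf : continuous (qf A).
Proof.
apply: cont_sum => i; apply: cont_sq.
have -> : (fun z : 'rV[R]_n => (z *m A^T) 0 i) = (fun z => \sum_j z 0 j * A^T j i).
  by apply: funext => z; rewrite mxE.
apply: cont_sum => j z; apply: continuousM; last exact: cst_continuous.
exact: (@coord_continuous R 1 n 0 j).
Qed.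

Definition sphere := [set z : 'rV[R]_n | nz z = 1].

Lemma sphere_compact : compact sphere.
Proof.
apply: bounded_closed_compact.
- exists 1; split; first exact: num_real.
  move=> M M1 z Sz /=.
  rewrite (_ : `|z| = mx_norm z) // mx_normrE.
  apply: le_trans (ltW M1).
  apply: bigmax_le => // ij _.
  have : z ij.1 ij.2 ^+ 2 <= 1.
    rewrite -Sz /nz (bigD1 ij.2) //= ; case: ij => i j /=.
    rewrite (ord1 i) lerDl; apply: sumr_ge0 => k _; exact: sqr_ge0.
  move=> H; rewrite ler_norml; apply/andP; split; nra.
- have := (continuous_closedP (@nz R n)).1 cont_nz [set 1] (@closed_eq R 1).
  by [].
Qed.

Lemma sphere_ne : (0 < n)%N -> sphere !=set0.
Proof.
move=> n0; exists (delta_mx 0 (Ordinal n0)); rewrite /sphere /nz /=.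
rewrite (bigD1 (Ordinal n0)) //= big1 ?addr0; first by rewrite mxE !eqxx expr1n.
by move=> k /negbTE kj; rewrite mxE kj andbF expr0n.
Qed.

Lemma ext_min : (0 < n)%N ->
  exists z0, nz z0 = 1 /\ forall z, nz z = 1 -> qf A z0 <= qf A z.
Proof.
move=> n0.
have [c cS H] := compact_EVT_min (sphere_ne n0) sphere_compact
   (continuous_subspaceT cont_qf).
exists c; split; first by move: cS; rewrite inE.
by move=> z zS; apply: H; rewrite inE.
Qed.

Lemma ext_max : (0 < n)%N ->
  exists z0, nz z0 = 1 /\ forall z, nz z = 1 -> qf A z <= qf A z0.
Proof.
move=> n0.
have [c cS H] := compact_EVT_max (sphere_ne n0) sphere_compact
   (continuous_subspaceT cont_qf).
exists c; split; first by move: cS; rewrite inE.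
by move=> z zS; apply: H; rewrite inE.
Qed.

End PC2.

Section PC3.
Variable R : realType.
Variables (m n : nat) (A : 'M[R]_(m, n)).

Lemma enorm_nz (x : 'cV[R]_n) : enorm x = Num.sqrt (nz x^T).
Proof. by rewrite /enorm /nz; congr Num.sqrt; apply: eq_bigr => i _; rewrite big_ord1 mxE. Qed.

Lemma enorm_qf (x : 'cV[R]_n) : enorm (A *m x) = Num.sqrt (qf A x^T).
Proof.
rewrite /enorm /qf; congr Num.sqrt; apply: eq_bigr => i _.
by rewrite big_ord1 -trmx_mul [in RHS]mxE.
Qed.

Lemma hom_min z0 : nz z0 = 1 -> (forall z, nz z = 1 -> qf A z0 <= qf A z) ->
  forall z, qf A z0 * nz z <= qf A z.
Proof.
move=> n1 H z.
have [e0|ne0] := eqVneq (nz z) 0.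
  by rewrite e0 mulr0 qf_ge0.
have sp : 0 < Num.sqrt (nz z) by rewrite sqrtr_gt0 lt_def ne0 nz_ge0.
set s := Num.sqrt (nz z) in sp.
have ss : s ^+ 2 = nz z by rewrite sqr_sqrtr // nz_ge0.
have := H (s^-1 *: z); rewrite nzZ qfZ -ss exprVn mulVf ?expf_neq0 ?gt_eqF // => /(_ erefl).
by rewrite mulrC -ler_pdivlMr ?exprn_gt0 // mulrC.
Qed.

Lemma hom_max z0 : nz z0 = 1 -> (forall z, nz z = 1 -> qf A z <= qf A z0) ->
  forall z, qf A z <= qf A z0 * nz z.
Proof.
move=> n1 H z.
have [e0|ne0] := eqVneq (nz z) 0.
  by rewrite e0 mulr0 (nz_eq0 e0) /qf big1 // => i _; rewrite mul0mx mxE expr0n.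
have sp : 0 < Num.sqrt (nz z) by rewrite sqrtr_gt0 lt_def ne0 nz_ge0.
set s := Num.sqrt (nz z) in sp.
have ss : s ^+ 2 = nz z by rewrite sqr_sqrtr // nz_ge0.
have := H (s^-1 *: z); rewrite nzZ qfZ -ss exprVn mulVf ?expf_neq0 ?gt_eqF // => /(_ erefl).
by rewrite mulrC -ler_pdivrMr ?exprn_gt0 // mulrC.
Qed.

Lemma nz_pos (z : 'rV[R]_n) : z != 0 -> 0 < nz z.
Proof. by move=> z0; rewrite lt_def nz_ge0 andbT; apply: contraNN z0 => /eqP /nz_eq0 ->. Qed.

Lemma nz1_neq0 (z : 'rV[R]_n) : nz z = 1 -> z != 0.
Proof.
move=> H; apply/eqP => z0.
have : nz (0 : 'rV[R]_n) = 0 by rewrite /nz big1 // => i _; rewrite mxE expr0n.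
by rewrite -z0 H => /eqP; rewrite oner_eq0.
Qed.

Lemma eig_min_bnd : (0 < n)%N -> forall z, eig_min (A^T *m A) * nz z <= qf A z.
Proof.
move=> n0; have [z0 [n1 H]] := ext_min A n0.
have hm := hom_min n1 H.
set mu := qf A z0.
have eig : eigenvalue (A^T *m A) mu.
  apply/eigenvalueP; exists z0; last exact: nz1_neq0.
  apply: (@ext_eig _ _ _ _ 1) => //; first exact: oner_neq0.
  by move=> z; rewrite mul1r subr_ge0.
have lb : lbound [set a | eigenvalue (A^T *m A) a] mu.
  move=> a /eigenvalueP [w wE w0].
  have := hm w; rewrite (qf_eig wE) ler_pM2r //; exact: nz_pos.
have -> : eig_min (A^T *m A) = mu.
  apply: le_anti; apply/andP; split.
    by apply: ge_inf; [exists mu | ].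
  by apply: lb_le_inf => //; exists mu.
exact: hm.
Qed.

Lemma eig_max_bnd : (0 < n)%N ->
  0 <= eig_max (A^T *m A) /\ forall z, qf A z <= eig_max (A^T *m A) * nz z.
Proof.
move=> n0; have [z0 [n1 H]] := ext_max A n0.
have hm := hom_max n1 H.
set nu := qf A z0.
have eig : eigenvalue (A^T *m A) nu.
  apply/eigenvalueP; exists z0; last exact: nz1_neq0.
  apply: (@ext_eig _ _ _ _ (-1)) => //; first by rewrite oppr_eq0 oner_neq0.
  by move=> z; rewrite mulN1r oppr_ge0 subr_le0.
have ub : ubound [set a | eigenvalue (A^T *m A) a] nu.
  move=> a /eigenvalueP [w wE w0].
  have := hm w; rewrite (qf_eig wE) ler_pM2r //; exact: nz_pos.
have -> : eig_max (A^T *m A) = nu.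
  apply: le_anti; apply/andP; split.
    by apply: ge_sup => //; exists nu.
  by apply: sup_upper_bound => //; split; [exists nu | exists nu].
by split; [exact: qf_ge0 | exact: hm].
Qed.

Lemma eig_lower : (0 < n)%N -> forall x : 'cV[R]_n,
  Num.sqrt (eig_min (A^T *m A)) * enorm x <= enorm (A *m x).
Proof.
move=> n0 x; rewrite enorm_nz enorm_qf.
have [l0|l0] := boolP (eig_min (A^T *m A) <= 0).
  have -> : Num.sqrt (eig_min (A^T *m A)) = 0 by apply/eqP; rewrite sqrtr_eq0.
  by rewrite mul0r sqrtr_ge0.
rewrite -ltNge in l0.
rewrite -sqrtrM; last exact: ltW.
apply: ler_wsqrtr; exact: eig_min_bnd.
Qed.

Lemma eig_upper : (0 < n)%N -> forall x : 'cV[R]_n,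
  enorm (A *m x) <= Num.sqrt (eig_max (A^T *m A)) * enorm x.
Proof.
move=> n0 x; rewrite enorm_nz enorm_qf.
have [l0 H] := eig_max_bnd n0.
rewrite -sqrtrM //; apply: ler_wsqrtr; exact: H.
Qed.

End PC3.

Theorem lemma4p6 (R : realType) (d n m : nat) (v : 'I_n -> 'rV[R]_d)
    (cones : set {set 'I_n}) (U : 'M[R]_(m, d)) (A : 'M[R]_(m, n))
    (h0 : 'cV[R]_n) (y0 y yhat ybar : 'cV[R]_m) (hbar hhat : 'cV[R]_n) :
  simplicial_fan v cones ->
  polytopal v cones ->
  is_AU v cones U A ->
  deformation_cone v cones h0 ->
  y0 = A *m h0 ->
  (* yhat: the point of A_U P(Delta) closest to y *)
  (exists2 h, deformation_cone v cones h & yhat = A *m h) ->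
  (forall h, deformation_cone v cones h -> enorm (yhat - y) <= enorm (A *m h - y)) ->
  (* ybar: orthogonal projection of y onto A_U R^n *)
  (exists h, ybar = A *m h) ->
  (forall h : 'cV[R]_n, (A *m h)^T *m (y - ybar) = 0) ->
  A *m hbar = ybar ->
  A *m hhat = yhat ->
  enorm (yhat - y0) <= enorm (ybar - y0) /\
  Num.sqrt (eig_min (A^T *m A)) * enorm (hhat - h0)
    <= Num.sqrt (eig_max (A^T *m A)) * enorm (hbar - h0).
Proof.
move=> sf pol hAU dc0 ey0 exh clos exb orth ebar ehat.
have B := partB dc0 ey0 exh clos orth.
split => //.
have [n0|n0] := posnP n.
  have z : forall x : 'cV[R]_n, enorm x = 0.
    move=> x; rewrite /enorm big1 ?sqrtr0 // => i _.
    by have := ltn_ord i; rewrite [in X in (_ < X)%N]n0.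
  by rewrite !z !mulr0.
apply: le_trans (eig_lower A n0 (hhat - h0)) _.
rewrite mulmxBr ehat -ey0.
apply: le_trans B _.
rewrite -ebar ey0 -mulmxBr; exact: eig_upper.
Qed.
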